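(* Let $(S,T)$ be an ideally triangulated surface with $\chi(S)<0$, with edge set $E$ and triangle set $F$. Let $l^{(m)}\in\mathbb{R}^E$ ($m\ge 0$) be a sequence such that $\widetilde\Psi(l^{(m)})\to z$ as $m\to\infty$ for some $z\in P(T)$. Then for every corner of every triangle in $F$, the corresponding generalized angles $\theta^{(m)}$ in the metrics $l^{(m)}$ form a bounded sequence; in particular, if $\lim_{m\to\infty}\theta^{(m)}$ exists in $[0,\infty]$, it lies in $[0,\infty)$.
   Context: For $l\in\mathbb{R}^E$, realize each triangle of $T$ as a decorated ideal hyperbolic triangle (ideal triangle with a horodisk at each vertex) whose generalized edge lengths are given by $l$; here the generalized angle at a vertex is twice the length of the horocyclic arc inside the triangle, and the generalized length of an edge is the distance between the horodisks at its ends if they are disjoint and minus the distance between the points where the two horocycles meet the edge otherwise. (The lengths determine the angles via $\frac{e^{l_i}}{2}=\frac{2}{\theta_j\theta_k}$, with $\theta_i$ the angle opposite the edge of length $l_i$.) In a triangle with angles $\theta_i,\theta_j,\theta_k$, the radius invariant at the edge opposite $\theta_i$ is $\frac12(\theta_j+\theta_k-\theta_i)$. Define $\widetilde\Psi(l)(e)=r_f(e)+r_{f'}(e)$, where $f,f'$ are the two triangles adjacent to $e$ and $r_f(e),r_{f'}(e)$ are the radius invariants at $e$ in them. An edge cycle is a sequence $(e_1,t_1,\dots,e_k,t_k)$ of edges and triangles such that, with $e_{k+1}=e_1$, $e_i$ and $e_{i+1}$ are two distinct edges of $t_i$ for each $i$. $P(T)=\{z\in\mathbb{R}^E:\sum_{i=1}^k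 z(e_i)>0$ for every edge cycle $(e_1,t_1,\dots,e_k,t_k)\}$. *)

(* Defs.v *)
From Stdlib Require Import Reals Lra List Arith Relations.
Import ListNotations.
Open Scope R_scope.

(* Combinatorial ideal triangulation:
   edges   = {0, ..., nE-1},  triangles = {0, ..., nF-1},
   each triangle t has three sides (corners) i in {0,1,2};
   ed t i  = the edge of triangle t opposite to its corner i. *)

Definition nxt (i : nat) : nat := ((i + 1) mod 3)%nat.
Definition nxt2 (i : nat) : nat := ((i + 2) mod 3)%nat.

Definition ed_wf (nE nF : nat) (ed : nat -> nat -> nat) : Prop :=
  forall t i, (t < nF)%nat -> (i < 3)%nat -> (ed t i < nE)%nat.

Definition two_sided (nE nF : nat) (ed : nat -> nat -> nat) : Prop :=
  forall e, (e < nE)%nat ->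
    exists t1 i1 t2 i2,
      (t1 < nF)%nat /\ (i1 < 3)%nat /\ (t2 < nF)%nat /\ (i2 < 3)%nat /\
      (t1, i1) <> (t2, i2) /\ ed t1 i1 = e /\ ed t2 i2 = e /\
      forall t i, (t < nF)%nat -> (i < 3)%nat -> ed t i = e ->
        (t, i) = (t1, i1) \/ (t, i) = (t2, i2).

Definition tri_adj (nF : nat) (ed : nat -> nat -> nat) (t t' : nat) : Prop :=
  (t < nF)%nat /\ (t' < nF)%nat /\
  exists i j, (i < 3)%nat /\ (j < 3)%nat /\ ed t i = ed t' j.

Definition connected_tri (nF : nat) (ed : nat -> nat -> nat) : Prop :=
  forall t t', (t < nF)%nat -> (t' < nF)%nat ->
    clos_refl_trans nat (tri_adj nF ed) t t'.

(* Euler characteristic of the punctured surface S = closed surface minus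
   the ideal vertices: chi(S) = V - E + F - V = F - E. *)
Definition euler_char (nE nF : nat) : Z := (Z.of_nat nF - Z.of_nat nE)%Z.

(* Generalized angle at corner i of triangle t for edge lengths l:
   the unique positive solution of  e^{l_i}/2 = 2/(theta_j theta_k),
   namely theta_i = 2 exp((l_i - l_j - l_k)/2). *)
Definition theta (ed : nat -> nat -> nat) (l : nat -> R) (t i : nat) : R :=
  2 * exp ((l (ed t i) - l (ed t (nxt i)) - l (ed t (nxt2 i))) / 2).

Definition radius (ed : nat -> nat -> nat) (l : nat -> R) (t i : nat) : R :=
  (theta ed l t (nxt i) + theta ed l t (nxt2 i) - theta ed l t i) / 2.

Definition sumR (f : nat -> R) (n : nat) : R :=
  fold_right Rplus 0 (map f (seq 0 n)).

Definition Psi (nF : nat) (ed : nat -> nat -> nat) (l : nat -> R) (e : nat) : R :=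
  sumR (fun t => sumR (fun i =>
         if Nat.eq_dec (ed t i) e then radius ed l t i else 0) 3) nF.

(* An edge cycle (e_1,t_1,...,e_k,t_k) is encoded as a nonempty list of
   triples (t_i, a_i, b_i): a_i <> b_i are two sides of t_i, with
   e_i = ed t_i a_i and e_{i+1} = ed t_i b_i (indices cyclic). *)
Definition cyc_t (c : list (nat * nat * nat)) (i : nat) : nat :=
  fst (fst (nth i c (0%nat, 0%nat, 0%nat))).
Definition cyc_a (c : list (nat * nat * nat)) (i : nat) : nat :=
  snd (fst (nth i c (0%nat, 0%nat, 0%nat))).
Definition cyc_b (c : list (nat * nat * nat)) (i : nat) : nat :=
  snd (nth i c (0%nat, 0%nat, 0%nat)).

Definition edge_cycle (nF : nat) (ed : nat -> nat -> nat)
    (c : list (nat * nat * nat)) : Prop :=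
  c <> [] /\
  forall i, (i < length c)%nat ->
    (cyc_t c i < nF)%nat /\ (cyc_a c i < 3)%nat /\ (cyc_b c i < 3)%nat /\
    cyc_a c i <> cyc_b c i /\
    ed (cyc_t c i) (cyc_b c i) =
      ed (cyc_t c ((i + 1) mod length c)) (cyc_a c ((i + 1) mod length c)).

Definition in_P (nF : nat) (ed : nat -> nat -> nat) (z : nat -> R) : Prop :=
  forall c, edge_cycle nF ed c ->
    0 < sumR (fun i => z (ed (cyc_t c i) (cyc_a c i))) (length c).

(* Main.v *)
Require Import Defs.
From Stdlib Require Import Reals List Arith Relations Lra Lia.
Import ListNotations.
Open Scope R_scope.

Lemma fold_shift (l : list R) (a : R) :
  fold_right Rplus a l = fold_right Rplus 0 l + a.
Proof. induction l; simpl; [lra | rewrite IHl; lra]. Qed.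

Lemma sumR_S f n : sumR f (S n) = sumR f n + f n.
Proof.
  unfold sumR. rewrite seq_S, map_app, fold_right_app. simpl.
  rewrite fold_shift. lra.
Qed.

Lemma sumR_0 f : sumR f 0 = 0.
Proof. reflexivity. Qed.

Lemma sumR_ext f g n : (forall k, (k < n)%nat -> f k = g k) -> sumR f n = sumR g n.
Proof.
  induction n; intros H; [reflexivity|].
  rewrite !sumR_S, IHn, H; auto; lia.
Qed.

Lemma sumR_plus f g n : sumR (fun k => f k + g k) n = sumR f n + sumR g n.
Proof. induction n; [rewrite !sumR_0; lra|]. rewrite !sumR_S, IHn. lra. Qed.

Lemma sumR_zero n : sumR (fun _ => 0) n = 0.
Proof. induction n; [reflexivity|]. rewrite sumR_S, IHn. lra. Qed.

Lemma sumR_swap (f : nat -> nat -> R) m n :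
  sumR (fun a => sumR (fun b => f a b) n) m = sumR (fun b => sumR (fun a => f a b) m) n.
Proof.
  induction m.
  - rewrite sumR_0. symmetry. apply sumR_zero.
  - rewrite sumR_S, IHm. rewrite <- sumR_plus. apply sumR_ext. intros. rewrite sumR_S. reflexivity.
Qed.

Lemma sumR_ind (e0 : nat) (c : R) n : (e0 < n)%nat ->
  sumR (fun e => if Nat.eq_dec e0 e then c else 0) n = c.
Proof.
  induction n; intros H; [lia|]. rewrite sumR_S.
  destruct (Nat.eq_dec e0 n).
  - subst. rewrite (sumR_ext _ (fun _ => 0)). rewrite sumR_zero; lra.
    intros k Hk. destruct (Nat.eq_dec n k); [lia|reflexivity].
  - rewrite IHn; [lra|lia].
Qed.

Lemma sumR_le f n k : (forall j, (j < n)%nat -> 0 <= f j) -> (k < n)%nat -> f k <= sumR f n.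
Proof.
  induction n; intros H Hk; [lia|]. rewrite sumR_S.
  assert (0 <= sumR f n).
  { clear IHn Hk. induction n; [rewrite sumR_0; lra|]. rewrite sumR_S.
    assert (0 <= f n) by (apply H; lia). assert (0 <= sumR f n) by (apply IHn; intros; apply H; lia). lra. }
  destruct (Nat.eq_dec k n).
  - subst. lra.
  - assert (f k <= sumR f n) by (apply IHn; [intros; apply H; lia | lia]).
    assert (0 <= f n) by (apply H; lia). lra.
Qed.

Lemma theta_pos ed l t i : 0 < theta ed l t i.
Proof. unfold theta. assert (0 < exp ((l (ed t i) - l (ed t (nxt i)) - l (ed t (nxt2 i))) / 2)) by apply exp_pos. lra. Qed.

Lemma rad_sum ed l t : sumR (fun i => radius ed l t i) 3 = sumR (fun i => theta ed l t i) 3 / 2.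
Proof.
  rewrite !sumR_S, !sumR_0. unfold radius.
  replace (nxt 0) with 1%nat by reflexivity.
  replace (nxt 1) with 2%nat by reflexivity.
  replace (nxt 2) with 0%nat by reflexivity.
  replace (nxt2 0) with 2%nat by reflexivity.
  replace (nxt2 1) with 0%nat by reflexivity.
  replace (nxt2 2) with 1%nat by reflexivity.
  lra.
Qed.

Lemma total nE nF ed (Hwf : ed_wf nE nF ed) l :
  sumR (fun t => sumR (fun i => theta ed l t i) 3) nF = 2 * sumR (fun e => Psi nF ed l e) nE.
Proof.
  unfold Psi.
  rewrite (sumR_swap (fun e t => sumR (fun i => if Nat.eq_dec (ed t i) e then radius ed l t i else 0) 3) nE nF).
  rewrite (sumR_ext (fun b => sumR (fun a => sumR (fun i => if Nat.eq_dec (ed b i) a then radius ed l b i else 0) 3) nE) (fun t => sumR (fun i => radius ed l t i) 3)).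
  - rewrite (sumR_ext _ (fun t => 2 * sumR (fun i => radius ed l t i) 3)).
    + clear Hwf. induction nF; [rewrite !sumR_0; lra|]. rewrite !sumR_S, IHnF. lra.
    + intros t _. rewrite rad_sum. lra.
  - intros t Ht. rewrite sumR_swap. apply sumR_ext. intros i Hi.
    apply sumR_ind. apply Hwf; auto.
Qed.

Lemma sum_cv (u : nat -> nat -> R) (z : nat -> R) n :
  (forall e, (e < n)%nat -> Un_cv (fun m => u m e) (z e)) ->
  Un_cv (fun m => sumR (u m) n) (sumR z n).
Proof.
  induction n; intros H.
  - rewrite sumR_0. intros eps He. exists 0%nat. intros. rewrite sumR_0. unfold R_dist. rewrite Rminus_0_r, Rabs_R0. lra.
  - rewrite sumR_S. apply (Un_cv_ext (fun m => sumR (u m) n + u m n)).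
    + intros; rewrite sumR_S; reflexivity.
    + apply CV_plus; [apply IHn; intros; apply H; lia | apply H; lia].
Qed.

Theorem lemma2p4 (nE nF : nat) (ed : nat -> nat -> nat)
  (Hwf : ed_wf nE nF ed) (Htwo : two_sided nE nF ed)
  (Hconn : connected_tri nF ed) (Hchi : (euler_char nE nF < 0)%Z)
  (lseq : nat -> nat -> R) (z : nat -> R)
  (Hz : in_P nF ed z)
  (Hlim : forall e, (e < nE)%nat -> Un_cv (fun m => Psi nF ed (lseq m) e) (z e)) :
  forall t i, (t < nF)%nat -> (i < 3)%nat ->
    (exists M, forall m, theta ed (lseq m) t i <= M) /\
    ~ cv_infty (fun m => theta ed (lseq m) t i).
Proof.
  intros t i Ht Hi.
  assert (Hcv := sum_cv (fun m e => Psi nF ed (lseq m) e) z nE Hlim).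
  assert (Hb : bound (EUn (fun m => sumR (fun e => Psi nF ed (lseq m) e) nE))).
  { apply cauchy_bound, CV_Cauchy. exists (sumR z nE). exact Hcv. }
  destruct Hb as [B HB].
  assert (HM : forall m, theta ed (lseq m) t i <= 2 * B).
  { intro m.
    assert (H1 : sumR (fun e => Psi nF ed (lseq m) e) nE <= B) by (apply HB; exists m; reflexivity).
    pose proof (total nE nF ed Hwf (lseq m)) as Ht2.
    assert (theta ed (lseq m) t i <= sumR (fun i => theta ed (lseq m) t i) 3).
    { apply (sumR_le (fun i => theta ed (lseq m) t i)); auto. intros; left; apply theta_pos. }
    assert (sumR (fun i => theta ed (lseq m) t i) 3 <= sumR (fun t => sumR (fun i => theta ed (lseq m) t i) 3) nF).
    { apply (sumR_le (fun t => sumR (fun i => theta ed (lseq m) t i) 3)); auto.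
      intros j _. rewrite !sumR_S, sumR_0. pose proof (theta_pos ed (lseq m) j 0).
      pose proof (theta_pos ed (lseq m) j 1). pose proof (theta_pos ed (lseq m) j 2). lra. }
    assert (0 <= B).
    { assert (0 <= sumR (fun t => sumR (fun i => theta ed (lseq m) t i) 3) nF).
      { pose proof (theta_pos ed (lseq m) t i). lra. }
      lra. }
    lra. }
  split.
  - exists (2 * B). exact HM.
  - intros Hinf. destruct (Hinf (2 * B)) as [N HN].
    specialize (HN N (le_n N)). specialize (HM N). lra.
Qed.
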